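(* For every $n \ge 1$ and every $\omega \in S_n$, the poset $M_\omega$ is $B_2$-free if and only if $\omega$ avoids both the pattern $3412$ and the pattern $3421$.
   Context: Permutations $\omega\in S_n$ are written in one-line notation $\omega=\omega(1)\omega(2)\cdots\omega(n)$. Let ${\rm Inv}(\omega)=\{(i,j): 1\le i<j\le n,\ \omega(i)>\omega(j)\}$. For $1\le i\le n$ let $c_i(\omega)=\#\{j: i<j\le n,\ \omega(i)>\omega(j)\}$, and for $1\le i<j\le n$ let $c_{i,j}(\omega)=\#\{k: i<k<j,\ \omega(i)>\omega(k)\}$. Write $[m]=\{1,\dots,m\}$. For $i\in[n]$ with $c_i(\omega)>0$ and $x\in[c_i(\omega)]$, define $m_{i,x}(\omega)\in\mathbb{N}^n$ coordinatewise: its $j$-th coordinate is $0$ if $j<i$; $x$ if $j=i$; $0$ if $j>i$ and $(i,j)\in{\rm Inv}(\omega)$; and $\max\{0,\,x-c_{i,j}(\omega)\}$ if $j>i$ and $(i,j)\notin{\rm Inv}(\omega)$. Let $M_\omega=\{m_{i,x}(\omega): i\in[n],\ c_i(\omega)>0,\ x\in[c_i(\omega)]\}$, partially ordered by the product order on $\mathbb{N}^n$ ($u\le v$ iff $u_k\le v_k$ for all $k$). $B_2$ denotes the Boolean lattice of rank 2 (four elements: a minimum, a maximum, and two incomparable elements between them). A poset $P$ is $B_2$-free if no four distinct elements of $P$ form an induced subposet isomorphic to $B_2$. $\omega$ contains the pattern $3412$ (resp. $3421$) if there exist $i<j<k<l$ with $\omega(k)<\omega(l)<\omega(i)<\omega(j)$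 (resp. $\omega(l)<\omega(k)<\omega(i)<\omega(j)$); $\omega$ avoids the pattern otherwise. *)

(* Defs.v *)
(* Positions 1..n are represented by 'I_n (0..n-1) and
   values omega(i) by the permutation values in 'I_n; all notions below only
   depend on relative order, so the shift by one is harmless. *)
From mathcomp Require Import all_boot all_fingroup.
Set Implicit Arguments. Unset Strict Implicit. Unset Printing Implicit Defensive.

Definition inv_pair n (w : 'S_n) (i j : 'I_n) : bool := (i < j) && (w j < w i).

Definition cnt n (w : 'S_n) (i : 'I_n) : nat :=
  #|[set j : 'I_n | (i < j) && (w j < w i)]|.

Definition cnt2 n (w : 'S_n) (i j : 'I_n) : nat :=
  #|[set k : 'I_n | [&& i < k, k < j & w k < w i]]|.

(* m_{i,x}(w) in N^n; max{0, x - c} is truncated subtraction on nat *)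
Definition mvec n (w : 'S_n) (i : 'I_n) (x : nat) : {ffun 'I_n -> nat} :=
  [ffun j : 'I_n =>
     if j < i then 0
     else if j == i then x
     else if inv_pair w i j then 0
     else x - cnt2 w i j].

Definition inM n (w : 'S_n) (v : {ffun 'I_n -> nat}) : Prop :=
  exists (i : 'I_n) (x : nat),
    0 < cnt w i /\ 1 <= x <= cnt w i /\ v = mvec w i x.

Definition vle n (u v : {ffun 'I_n -> nat}) : Prop := forall k : 'I_n, u k <= v k.

Definition B2_free n (w : 'S_n) : Prop :=
  ~ exists a b c d : {ffun 'I_n -> nat},
      [/\ inM w a, inM w b, inM w c & inM w d] /\
      [&& a != b, a != c, a != d, b != c, b != d & c != d] /\
      [/\ vle a b, vle a c, vle b d & vle c d] /\
      ~ vle b c /\ ~ vle c b.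

Definition contains3412 n (w : 'S_n) : Prop :=
  exists i j k l : 'I_n, [/\ i < j, j < k & k < l] /\
    [/\ w k < w l, w l < w i & w i < w j].

Definition contains3421 n (w : 'S_n) : Prop :=
  exists i j k l : 'I_n, [/\ i < j, j < k & k < l] /\
    [/\ w l < w k, w k < w i & w i < w j].

(* Main.v *)
Require Import Defs.
From mathcomp Require Import all_boot all_fingroup.
From mathcomp Require Import zify.
Set Implicit Arguments. Unset Strict Implicit. Unset Printing Implicit Defensive.

Lemma card_le_U (T : finType) (A B C : {set T}) :
  A \subset B :|: C -> #|A| <= #|B| + #|C|.
Proof. move=> /subset_leq_card; rewrite cardsU; lia. Qed.

Lemma card_disj_le (T : finType) (A B C : {set T}) :
  A :|: B \subset C -> (forall x, x \in A -> x \notin B) -> #|A| + #|B| <= #|C|.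
Proof.
move=> /subset_leq_card H D.
have E : A :&: B = set0.
  apply/setP => x; rewrite !inE; case: (boolP (x \in A)) => //= /D; by case: (x \in B).
move: H; rewrite cardsU E cards0; lia.
Qed.

Section S.
Variables (n : nat) (w : 'S_n).

Definition Lc (p q : 'I_n) := #|[set k : 'I_n | (q < k) && (w k < w p)]|.

Lemma ord_eq (i j : 'I_n) : (i : nat) = j -> i = j.
Proof. exact: val_inj. Qed.

Lemma wneq (i j : 'I_n) : i != j -> (w i : nat) != w j.
Proof. move=> ne; apply/eqP => /val_inj /perm_inj e; by rewrite e eqxx in ne. Qed.

Lemma wlt (i j : 'I_n) : (i : nat) != j -> ~~ (w i < w j) -> w j < w i.
Proof.
move=> ne; have : i != j by apply/eqP => e; rewrite e eqxx in ne.
move/wneq; lia.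
Qed.

Lemma mvec_self i x : mvec w i x i = x.
Proof. by rewrite ffunE ltnn eqxx. Qed.

Lemma mvec_below (i j : 'I_n) x : j < i -> mvec w i x j = 0.
Proof. by move=> h; rewrite ffunE h. Qed.

Lemma mvec_lt (i j : 'I_n) x : i < j -> w i < w j -> mvec w i x j = x - cnt2 w i j.
Proof.
move=> h1 h2; rewrite ffunE ltnNge (ltnW h1) /=.
have -> : (j == i) = false by apply/eqP => e; rewrite e ltnn in h1.
by rewrite /Defs.inv_pair h1 /= ltnNge (ltnW h2).
Qed.

Lemma le_only (i i' : 'I_n) x y : 0 < x -> vle (mvec w i x) (mvec w i' y) ->
  (i = i' /\ x <= y) \/ [/\ i' < i, w i' < w i & x + cnt2 w i' i <= y].
Proof.
move=> x0 H; have := H i; rewrite mvec_self ffunE.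
case: (ltngtP i i') => [lt|gt|eq].
- lia.
- have -> : (i == i') = false by apply/eqP => e; rewrite e ltnn in gt.
  rewrite /Defs.inv_pair gt /=.
  case: ifP => hw; first lia.
  move=> hx; right; split => //; last lia.
  apply: wlt; [lia | by rewrite hw].
- have e : i = i' by apply: val_inj.
  subst; rewrite eqxx => h; by left.
Qed.

Lemma le_if_same i x y : x <= y -> vle (mvec w i x) (mvec w i y).
Proof.
move=> le k; rewrite !ffunE; case: ifP => // _; case: ifP => // _;
case: ifP => // _; exact: leq_sub2r.
Qed.

Lemma cnt2_split (i' i j : 'I_n) : i' < i -> w i' < w i ->
  cnt2 w i' j <= cnt2 w i' i + cnt2 w i j.
Proof.
move=> h1 h2; apply: card_le_U; apply/subsetP => k; rewrite !inE.
case: (ltngtP k i) => [lt|gt|eq].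
- lia.
- lia.
- have e : k = i by apply: val_inj.
  subst; lia.
Qed.

Lemma le_if_lt (i' i : 'I_n) x y : i' < i -> w i' < w i -> x + cnt2 w i' i <= y ->
  vle (mvec w i x) (mvec w i' y).
Proof.
move=> lt wl le k.
case: (ltngtP k i) => [ki|ik|eq].
- by rewrite mvec_below.
- rewrite ffunE.
  have -> : (k < i) = false by lia.
  have -> : (k == i) = false by apply/eqP => e; rewrite e ltnn in ik.
  case: ifP => [//|]; rewrite /Defs.inv_pair ik /= => nw.
  have wik : w i < w k by apply: wlt; [lia | by rewrite nw].
  rewrite mvec_lt; [|lia|lia].
  have := cnt2_split k lt wl; lia.
- have e : k = i by apply: val_inj.
  subst; rewrite mvec_self mvec_lt //; lia.
Qed.

Lemma cnt_split (p q : 'I_n) : p < q -> w p < w q -> cnt w p <= cnt2 w p q + Lc p q.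
Proof.
move=> h1 h2; apply: card_le_U; apply/subsetP => k; rewrite !inE.
case: (ltngtP k q) => [lt|gt|eq].
- lia.
- lia.
- have e : k = q by apply: val_inj.
  subst; lia.
Qed.

Lemma cnt_split_ge (p q : 'I_n) : p < q -> w p < w q -> cnt2 w p q + Lc p q <= cnt w p.
Proof.
move=> h1 h2; apply: card_disj_le.
  apply/subsetP => k; rewrite !inE; lia.
move=> k; rewrite !inE; lia.
Qed.

Lemma L_split (p b c : 'I_n) : b < c -> w p < w b -> w p < w c ->
  Lc p b <= cnt2 w b c + Lc p c.
Proof.
move=> h1 h2 h3; apply: card_le_U; apply/subsetP => k; rewrite !inE.
case: (ltngtP k c) => [lt|gt|eq].
- lia.
- lia.
- have e : k = c by apply: val_inj.
  subst; lia.
Qed.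

Lemma cnt2_mono (i j j' : 'I_n) : j <= j' -> cnt2 w i j <= cnt2 w i j'.
Proof. move=> h; apply: subset_leq_card; apply/subsetP => k; rewrite !inE; lia. Qed.

Lemma cnt2_incr (b c a : 'I_n) : b < c -> c < a -> w c < w b ->
  (cnt2 w b c).+1 <= cnt2 w b a.
Proof.
move=> h1 h2 h3.
have : #|c |: [set k : 'I_n | [&& b < k, k < c & w k < w b]]| <= cnt2 w b a.
  apply: subset_leq_card; apply/subsetP => k; rewrite !inE.
  case/orP => [/eqP ->|]; lia.
rewrite cardsU1 inE ltnn andbF /=; done.
Qed.

Definition patq (p q : 'I_n) := [/\ p < q, w p < w q & 1 < Lc p q].

Lemma key (ia ib ic id : 'I_n) xa xb xc xd :
  0 < xa -> 0 < xb -> 0 < xc -> xd <= cnt w id ->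
  mvec w ia xa != mvec w ic xc ->
  vle (mvec w ia xa) (mvec w ib xb) -> vle (mvec w ia xa) (mvec w ic xc) ->
  vle (mvec w ib xb) (mvec w id xd) -> vle (mvec w ic xc) (mvec w id xd) ->
  ~ vle (mvec w ic xc) (mvec w ib xb) -> ib < ic ->
  patq id ic.
Proof.
move=> xa0 xb0 xc0 xdc ac hab hac hbd hcd ncb bc.
have [[e _]|[idc wdc xcd]] := le_only xc0 hcd.
  subst; case: (le_only xb0 hbd) => [[e _]|[]]; [subst; lia | lia].
have cs := cnt_split idc wdc.
split => //.
case: (leqP 2 xc) => xc2; first lia.
have xc1 : xc = 1 by lia.
subst xc.
have [[e xle]|[ica wca xac]] := le_only xa0 hac.
  subst; have xa1 : xa = 1 by lia.
  by subst; rewrite eqxx in ac.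
have [[e _]|[iba wba xab]] := le_only xa0 hab.
  subst; lia.
have wcb : w ic < w ib.
  apply: wlt; first lia.
  apply/negP => wbc; apply: ncb; apply: le_if_lt => //.
  have := cnt2_mono ib (ltnW ica); lia.
have [[e _]|[idb wdb xbd]] := le_only xb0 hbd.
  subst; lia.
have cs2 := cnt_split idb wdb.
have ls := L_split bc wdb wdc.
have ci := cnt2_incr bc ica wcb.
lia.
Qed.
End S.

Section T.
Variables (n : nat) (w : 'S_n).

Lemma construct (p q : 'I_n) : patq w p q -> ~ B2_free w.
Proof.
case=> pq wpq L2 HB; apply: HB.
have cq : 2 <= cnt w q.
  apply: leq_trans L2 _; apply: subset_leq_card; apply/subsetP => k; rewrite !inE; lia.
have cp := cnt_split_ge pq wpq.
exists (mvec w q 1), (mvec w p (1 + cnt2 w p q)), (mvec w q 2), (mvec w p (2 + cnt2 w p q)).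
split.
  split; [exists q, 1 | exists p, (1 + cnt2 w p q) | exists q, 2 | exists p, (2 + cnt2 w p q)];
  (split; [lia | split; [lia | done]]).
split.
  have ne : forall (u v : {ffun 'I_n -> nat}) k, u k != v k -> u != v.
    by move=> u v k h; apply/eqP => e; rewrite e eqxx in h.
  repeat (apply/andP; split);
  first [apply: (ne _ _ p); rewrite ?mvec_self ?mvec_below //; lia
        |apply: (ne _ _ q); rewrite ?mvec_self ?mvec_below //; lia].
split.
  split.
  - apply: le_if_lt => //; lia.
  - apply: le_if_same; lia.
  - apply: le_if_same; lia.
  - apply: le_if_lt => //; lia.
split.
- move=> H; have := H p; rewrite mvec_self mvec_below //; lia.
- move=> H; have := H q; rewrite mvec_self mvec_lt //; lia.
Qed.

Lemma pat_contains (p q : 'I_n) : patq w p q -> contains3412 w \/ contains3421 w.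
Proof.
case=> pq wpq /card_gt1P [r [s [hr hs ne]]]; move: hr hs; rewrite !inE => hr hs.
have ne' : (r : nat) != s by apply/eqP => e; move/eqP: ne; apply; apply: val_inj.
wlog rs : r s hr hs ne ne' / r < s.
  move=> W; case: (ltngtP r s) => h.
  - exact: (W r s hr hs ne ne' h).
  - by apply: (W s r hs hr _ _ h); rewrite eq_sym.
  - lia.
case: (ltngtP (w r) (w s)) => h.
- left; exists p, q, r, s; split; split => //; lia.
- right; exists p, q, r, s; split; split => //; lia.
- have := wneq w ne; lia.
Qed.

Lemma contains_pat : contains3412 w \/ contains3421 w -> exists p q : 'I_n, patq w p q.
Proof.
case=> [[i [j [k [l [[h1 h2 h3] [h4 h5 h6]]]]]]|[i [j [k [l [[h1 h2 h3] [h4 h5 h6]]]]]]];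
  exists i, j; split => //; apply/card_gt1P; exists k, l; rewrite !inE;
  (split; [lia | lia | apply/eqP => e; subst; lia]).
Qed.
End T.

Theorem mainTheorem1 (n : nat) (hn : 1 <= n) (w : 'S_n) :
  B2_free w <-> (~ contains3412 w /\ ~ contains3421 w).
Proof.
split.
- move=> HB; split => H.
  + have [p [q P]] := contains_pat (or_introl H); exact: construct P HB.
  + have [p [q P]] := contains_pat (or_intror H); exact: construct P HB.
- move=> [n1 n2] [a [b [c [d [[[ia [xa [_ [ha ->]]]] [ib [xb [_ [hb ->]]]]
     [ic [xc [_ [hc ->]]]] [id [xd [_ [hd ->]]]]] [dist [[lab lac lbd lcd] [nbc ncb]]]]]]]].
  move: dist => /and5P [ab ac ad bc /andP [bd cd]].
  have fin : forall p q, patq w p q -> False.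
    by move=> p q /pat_contains [].
  case: (ltngtP ib ic) => h.
  + apply: (fin id ic); apply: (key (ia:=ia) (ib:=ib) (ic:=ic) (id:=id) (xa:=xa) (xb:=xb) (xc:=xc) (xd:=xd)) => //; lia.
  + apply: (fin id ib); apply: (key (ia:=ia) (ib:=ic) (ic:=ib) (id:=id) (xa:=xa) (xb:=xc) (xc:=xb) (xd:=xd)) => //; lia.
  + have e : ib = ic by apply: val_inj.
    subst; case: (leqP xb xc) => h'.
    * by apply: nbc; apply: le_if_same.
    * by apply: ncb; apply: le_if_same; lia.
Qed.
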